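(* Let $(X,T)$ be a minimal topological dynamical system with $T$ a homeomorphism, and suppose $\delta>0$ is such that $(X,T)$ is block $\mathcal{F}_{ip}$-sensitive with sensitive constant $10\delta$. Let $x\in X$ and let $U$ be any neighborhood of $x$. Then there are $z\in U$ and $y\in X$ such that $(y,z)\in\mathbf{RP}^{[\infty]}(X)$ and $d(z,y)\ge\delta$.
   Context: A topological dynamical system: compact metric space $(X,d)$ with continuous surjection $T$; minimal means every orbit is dense. A finite IP-set of length $n$ is $FS((p_i)_{i=1}^n)=\{\sum_{i\in\alpha}p_i:\emptyset\ne\alpha\subset\{1,\dots,n\}\}$ with $p_i\in\mathbb{N}$. $(X,T)$ is block $\mathcal{F}_{ip}$-sensitive with sensitive constant $c>0$ if for each $x\in X$, each neighborhood $U$ of $x$ and each $l\in\mathbb{N}$ there is $y_l\in U$ such that $\{n\in\mathbb{Z}_+:d(T^nx,T^ny_l)>c\}$ contains a finite IP-set of length $l$. For $d\in\mathbb{N}$, $(x,y)\in\mathbf{RP}^{[d]}(X)$ if for every $\eta>0$ there are $x',y'$ and $\mathbf{n}\in\mathbb{Z}^d$ with $d(x,x')<\eta$, $d(y,y')<\eta$, $d(T^{\mathbf{n}\cdot\varepsilon}x',T^{\mathbf{n}\cdot\varepsilon}y')<\eta$ for all $\varepsilon\in\{0,1\}^d\setminus\{0\}$; $\mathbf{RP}^{[\infty]}=\bigcap_d\mathbf{RP}^{[d]}$. *)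

(* Defs.v *)
From Stdlib Require Import Reals ZArith.
Open Scope R_scope.

Section Defs.
Context {X : Type} (d : X -> X -> R).

Definition is_metric : Prop :=
  (forall x y, 0 <= d x y) /\
  (forall x y, d x y = 0 <-> x = y) /\
  (forall x y, d x y = d y x) /\
  (forall x y z, d x z <= d x y + d y z).

Definition open_set (U : X -> Prop) : Prop :=
  forall x, U x -> exists r, r > 0 /\ forall y, d x y < r -> U y.

Definition nbhd (x : X) (U : X -> Prop) : Prop :=
  exists V, open_set V /\ V x /\ forall y, V y -> U y.

Definition compact_space : Prop :=
  forall (I : Type) (F : I -> X -> Prop),
    (forall i, open_set (F i)) -> (forall x, exists i, F i x) ->
    exists l : list I, forall x, exists i, List.In i l /\ F i x.

Definition continuous_map (f : X -> X) : Prop :=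
  forall x eps, eps > 0 -> exists del, del > 0 /\
    forall y, d x y < del -> d (f x) (f y) < eps.

Definition minimal (T : X -> X) : Prop :=
  forall x y eps, eps > 0 -> exists n : nat, d (Nat.iter n T x) y < eps.

Definition zpow (T Tinv : X -> X) (k : Z) (x : X) : X :=
  match k with
  | Z0 => x
  | Zpos p => Nat.iter (Pos.to_nat p) T x
  | Zneg p => Nat.iter (Pos.to_nat p) Tinv x
  end.

Fixpoint sum_below {A : Type} (add : A -> A -> A) (zero : A)
    (f : nat -> A) (n : nat) : A :=
  match n with
  | O => zero
  | S m => add (sum_below add zero f m) (f m)
  end.

(* S contains a finite IP-set FS((p_i)_{i=1}^l) of length l, p_i in N = {1,2,...} *)
Definition contains_finite_IP (S : nat -> Prop) (l : nat) : Prop :=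
  exists p : nat -> nat, (forall i, (i < l)%nat -> (1 <= p i)%nat) /\
    forall alpha : nat -> bool, (exists i, (i < l)%nat /\ alpha i = true) ->
      S (sum_below Nat.add 0%nat (fun i => if alpha i then p i else 0%nat) l).

Definition block_Fip_sensitive (T : X -> X) (c : R) : Prop :=
  forall x U, nbhd x U -> forall l : nat, exists y, U y /\
    contains_finite_IP (fun n => d (Nat.iter n T x) (Nat.iter n T y) > c) l.

Definition dot_eps (D : nat) (n : nat -> Z) (eps : nat -> bool) : Z :=
  sum_below Z.add 0%Z (fun i => if eps i then n i else 0%Z) D.

Definition RP (T Tinv : X -> X) (D : nat) (x y : X) : Prop :=
  forall eta, eta > 0 -> exists x' y' (n : nat -> Z),
    d x x' < eta /\ d y y' < eta /\
    forall eps : nat -> bool, (exists i, (i < D)%nat /\ eps i = true) ->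
      d (zpow T Tinv (dot_eps D n eps) x') (zpow T Tinv (dot_eps D n eps) y') < eta.

Definition RP_inf (T Tinv : X -> X) (x y : X) : Prop :=
  forall D : nat, (1 <= D)%nat -> RP T Tinv D x y.

End Defs.

(* Main.v *)
Require Import Defs.
From Stdlib Require Import Reals ZArith.
From Stdlib Require Import Lia Lra List Classical ClassicalEpsilon FunctionalExtensionality.
Open Scope R_scope.

Module Comb.

Local Open Scope nat_scope.
Local Open Scope bool_scope.

Definition ns (f : nat -> nat) (n : nat) : nat := sum_below Nat.add 0 f n.

Lemma ns_S f n : ns f (S n) = ns f n + f n.
Proof. reflexivity. Qed.

Lemma ns_ext f g n : (forall i, i < n -> f i = g i) -> ns f n = ns g n.
Proof.
  induction n; intros H; [reflexivity|].
  rewrite !ns_S, IHn by (intros; apply H; lia). rewrite H by lia. reflexivity.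
Qed.

Lemma ns_zero f n : (forall i, i < n -> f i = 0) -> ns f n = 0.
Proof.
  induction n; intros H; [reflexivity|]. rewrite ns_S, IHn by (intros; apply H; lia).
  rewrite H by lia. reflexivity.
Qed.

Lemma ns_add f g n : ns (fun i => f i + g i) n = ns f n + ns g n.
Proof. induction n; [reflexivity|]. rewrite !ns_S, IHn. lia. Qed.

Lemma ns_split f N M : ns f (N + M) = ns f N + ns (fun i => f (N + i)) M.
Proof.
  induction M. - rewrite Nat.add_0_r. simpl. unfold ns at 3. simpl. lia.
  - replace (N + S M) with (S (N + M)) by lia. rewrite !ns_S, IHM. lia.
Qed.

Lemma ns_shift f n : ns f (S n) = f 0 + ns (fun i => f (S i)) n.
Proof.
  induction n. - simpl. unfold ns; simpl. lia.
  - rewrite ns_S, IHn, ns_S. lia.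
Qed.

Lemma ns_ge f n i : i < n -> f i <= ns f n.
Proof.
  induction n; intros H; [lia|]. rewrite ns_S.
  destruct (Nat.eq_dec i n); [subst; lia|]. specialize (IHn ltac:(lia)). lia.
Qed.

Lemma ns_lt_b g b M : b <= M ->
  ns (fun i => if i <? b then g i else 0) M = ns g b.
Proof.
  induction M; intros H.
  - assert (b = 0) by lia. subst. reflexivity.
  - destruct (Nat.eq_dec b (S M)).
    + subst. rewrite ns_S. rewrite (ns_ext _ g M).
      * rewrite ns_S. replace (M <? S M) with true by (symmetry; apply Nat.ltb_lt; lia). reflexivity.
      * intros i Hi. replace (i <? S M) with true by (symmetry; apply Nat.ltb_lt; lia). reflexivity.
    + rewrite ns_S, IHM by lia. replace (M <? b) with false by (symmetry; apply Nat.ltb_ge; lia). lia.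
Qed.

Lemma ns_interval g a b M : a <= b -> b <= M ->
  ns (fun i => if (a <=? i) && (i <? b) then g i else 0) M = ns g b - ns g a.
Proof.
  intros H1 H2.
  assert (E : ns (fun i => (if (a <=? i) && (i <? b) then g i else 0) + (if i <? a then g i else 0)) M
            = ns (fun i => if i <? b then g i else 0) M).
  { apply ns_ext. intros i _.
    destruct (Nat.leb_spec a i), (Nat.ltb_spec i b), (Nat.ltb_spec i a); simpl; lia. }
  rewrite ns_add, !ns_lt_b in E by lia. lia.
Qed.

Lemma ns_mono g a b : a <= b -> ns g a <= ns g b.
Proof. induction 1; [lia|]. rewrite ns_S. lia. Qed.

Definition sa (p : nat -> nat) (al : nat -> bool) (n : nat) : nat :=
  ns (fun i => if al i then p i else 0) n.

Lemma sa_eq (p : nat -> nat) (al : nat -> bool) n : sum_below Nat.add 0 (fun i => if al i then p i else 0) n = sa p al n.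
Proof. reflexivity. Qed.

Definition IP := contains_finite_IP.

Lemma IP_weaken (P Q : nat -> Prop) m : (forall n, P n -> Q n) -> IP P m -> IP Q m.
Proof.
  intros H [p [Hp Hs]]. exists p. split; auto.
Qed.

Lemma IP_zero P : IP P 0.
Proof. exists (fun _ => 1). split; [intros; lia|]. intros al [i [Hi _]]. lia. Qed.

Lemma IP_ext (P : nat -> Prop) m q g :
  (forall i, i < m -> 1 <= q i) ->
  (forall al, (exists i, i < m /\ al i = true) -> P (sa q al m)) ->
  1 <= g -> P g -> (forall al, (exists i, i < m /\ al i = true) -> P (g + sa q al m)) ->
  IP P (S m).
Proof.
  intros Hq Hs Hg Pg Hgs.
  exists (fun i => if i =? m then g else q i). split.
  - intros i Hi. destruct (Nat.eqb_spec i m); [lia|apply Hq; lia].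
  - intros al Hal. rewrite sa_eq. unfold sa. rewrite ns_S.
    rewrite (ns_ext _ (fun i => if al i then q i else 0) m).
    2:{ intros i Hi. destruct (Nat.eqb_spec i m); [lia|reflexivity]. }
    rewrite Nat.eqb_refl. fold (sa q al m).
    destruct (classic (exists i, i < m /\ al i = true)) as [He|Hn].
    + destruct (al m). * rewrite Nat.add_comm. apply Hgs, He. * rewrite Nat.add_0_r. apply Hs, He.
    + assert (Z0 : sa q al m = 0).
      { apply ns_zero. intros i Hi. destruct (al i) eqn:E; [|reflexivity]. exfalso; apply Hn; eauto. }
      rewrite Z0. destruct Hal as [i [Hi Hai]]. destruct (Nat.eq_dec i m).
      * subst. rewrite Hai. simpl. exact Pg.
      * exfalso; apply Hn. exists i. split; [lia|auto].
Qed.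

Lemma IP_use P m : IP P m -> exists q, (forall i, i < m -> 1 <= q i) /\
  forall al, (exists i, i < m /\ al i = true) -> P (sa q al m).
Proof. intros [q H]. exists q. exact H. Qed.

Lemma pigeon B (f : nat -> nat) : (forall j, j <= B -> f j < B) ->
  exists j j', j < j' /\ j' <= B /\ f j = f j'.
Proof.
  revert f. induction B; intros f H.
  - specialize (H 0 (le_n _)). lia.
  - destruct (classic (exists j, j <= B /\ f j = f (S B))) as [[j [Hj E]]|Hn].
    + exists j, (S B). repeat split; auto; lia.
    + set (g := fun j => if f j =? B then f (S B) else f j).
      destruct (IHB g) as [j [j' [H1 [H2 H3]]]].
      { intros j Hj. unfold g. destruct (Nat.eqb_spec (f j) B).
        - assert (f (S B) <> B). { intro E. apply Hn. exists j. split; [lia|congruence]. }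
          specialize (H (S B) (le_n _)). lia.
        - specialize (H j ltac:(lia)). lia. }
      exists j, j'. repeat split; try lia. unfold g in H3.
      destruct (Nat.eqb_spec (f j) B), (Nat.eqb_spec (f j') B); try congruence.
      * exfalso; apply Hn. exists j'. split; [lia|congruence].
      * exfalso; apply Hn. exists j. split; [lia|congruence].
Qed.

Definition upd (al : nat -> bool) N b : nat -> bool := fun i => if i =? N then b else al i.

Fixpoint Enc (K N : nat) (F : (nat -> bool) -> nat) : nat :=
  match N with
  | 0 => F (fun _ => false)
  | S N' => Enc K N' (fun al => F (upd al N' false)) + K^(2^N') * Enc K N' (fun al => F (upd al N' true))
  end.

Lemma Enc_bound K N : forall F, (forall al, F al < K) -> Enc K N F < K^(2^N).
Proof.
  induction N; intros F H; simpl.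
  - simpl. rewrite Nat.mul_1_r. apply H.
  - pose proof (IHN (fun al => F (upd al N false)) ltac:(intros; apply H)) as H1.
    pose proof (IHN (fun al => F (upd al N true)) ltac:(intros; apply H)) as H2.
    rewrite Nat.add_0_r, Nat.pow_add_r. set (B := K ^ 2 ^ N) in *. nia.
Qed.

Lemma Enc_inj K N : forall F G, (forall al, F al < K) -> (forall al, G al < K) ->
  Enc K N F = Enc K N G -> forall al, (forall i, N <= i -> al i = false) -> F al = G al.
Proof.
  induction N; intros F G HF HG E al Hal; simpl in E.
  - replace al with (fun _ : nat => false) by (extensionality i; symmetry; apply Hal; lia). exact E.
  - pose proof (Enc_bound K N (fun al => F (upd al N false)) ltac:(intros; apply HF)) as H1.
    pose proof (Enc_bound K N (fun al => G (upd al N false)) ltac:(intros; apply HG)) as H2.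
    rewrite (Nat.add_comm (Enc K N _)), (Nat.add_comm (Enc K N (fun al => G _))) in E.
    apply Nat.div_mod_unique in E; auto. destruct E as [E1 E2].
    set (al0 := upd al N false).
    assert (Hal0 : forall i, N <= i -> al0 i = false).
    { intros i Hi. unfold al0, upd. destruct (Nat.eqb_spec i N); auto. apply Hal; lia. }
    destruct (al N) eqn:EN.
    + pose proof (IHN _ _ (fun al => HF _) (fun al => HG _) E1 al0 Hal0) as R. simpl in R.
      replace (upd al0 N true) with al in R; auto.
      extensionality i. unfold al0, upd. destruct (Nat.eqb_spec i N); subst; auto.
    + pose proof (IHN _ _ (fun al => HF _) (fun al => HG _) E2 al0 Hal0) as R. simpl in R.
      replace (upd al0 N false) with al in R; auto.
      extensionality i. unfold al0, upd. destruct (Nat.eqb_spec i N); subst; auto.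
Qed.

Definition trunc (al : nat -> bool) N : nat -> bool := fun i => (i <? N) && al i.

Lemma sa_trunc p al N : sa p (trunc al N) N = sa p al N.
Proof. apply ns_ext. intros i Hi. unfold trunc. replace (i <? N) with true by (symmetry; apply Nat.ltb_lt; lia). reflexivity. Qed.

Lemma trunc_zero al N : forall i, N <= i -> trunc al N i = false.
Proof. intros i Hi. unfold trunc. replace (i <? N) with false by (symmetry; apply Nat.ltb_ge; lia). reflexivity. Qed.

Lemma cube m K : exists L, forall (S : nat -> Prop) (c : nat -> nat), (forall n, c n < K) -> IP S L ->
  exists f, 1 <= f /\ S f /\ IP (fun n => S n /\ S (f+n) /\ c (f+n) = c f) m.
Proof.
  induction m.
  - exists 1. intros S c Hc HIP. apply IP_use in HIP. destruct HIP as [p [Hp Hs]].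
    exists (p 0). split; [apply Hp; lia|]. split; [|apply IP_zero].
    specialize (Hs (fun i => i =? 0) ltac:(exists 0; auto)). exact Hs.
  - destruct IHm as [N HN].
    set (B := K^(2^N)).
    exists (N + B). intros S c Hc HIP. apply IP_use in HIP. destruct HIP as [p [Hp Hs]].
    set (R := fun j => ns (fun i => p (N + i)) j).
    assert (Hsel : forall al a b, a <= b -> b <= B -> (exists i, i < N /\ al i = true) \/ a < b ->
              S (sa p al N + (R b - R a))).
    { intros al a b Hab HbB Hne.
      set (al' := fun i => if i <? N then al i else (N + a <=? i) && (i <? N + b)).
      assert (E : sa p al' (N + B) = sa p al N + (R b - R a)).
      { unfold sa. rewrite ns_split. f_equal.
        - apply ns_ext. intros i Hi. unfold al'. replace (i <? N) with true by (symmetry; apply Nat.ltb_lt; lia). reflexivity.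
        - unfold R. rewrite <- (ns_interval (fun i => p (N + i)) a b B) by lia.
          apply ns_ext. intros i Hi. unfold al'.
          replace (N + i <? N) with false by (symmetry; apply Nat.ltb_ge; lia).
          destruct (Nat.leb_spec (N+a) (N+i)), (Nat.ltb_spec (N+i) (N+b)),
            (Nat.leb_spec a i), (Nat.ltb_spec i b); simpl; try reflexivity; lia. }
      rewrite <- E. apply Hs.
      destruct Hne as [[i [Hi Hai]]|Hab'].
      - exists i. split; [lia|]. unfold al'. replace (i <? N) with true by (symmetry; apply Nat.ltb_lt; lia). auto.
      - exists (N + a). split; [lia|]. unfold al'.
        replace (N + a <? N) with false by (symmetry; apply Nat.ltb_ge; lia).
        apply andb_true_intro; split; [apply Nat.leb_le|apply Nat.ltb_lt]; lia. }
    set (F := fun j al => c (sa p al N + R j)).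
    destruct (pigeon B (fun j => Enc K N (F j))) as [j [j' [Hjj [HjB HE]]]].
    { intros j _. apply Enc_bound. intros; apply Hc. }
    assert (Hcol : forall al, c (sa p al N + R j) = c (sa p al N + R j')).
    { intros al. rewrite <- sa_trunc.
      apply (Enc_inj K N (F j) (F j')); auto using trunc_zero; intros; apply Hc. }
    assert (HR : R j + 1 <= R j').
    { unfold R. pose proof (ns_mono (fun i => p (N + i)) (Datatypes.S j) j' Hjj). rewrite ns_S in H.
      pose proof (Hp (N + j) ltac:(lia)). lia. }
    assert (R0 : R 0 = 0) by reflexivity.
    set (S2 := fun n => S n /\ S (n + R j) /\ S (n + R j') /\ S (n + (R j' - R j)) /\ c (n + R j) = c (n + R j')).
    assert (HIP2 : IP S2 N).
    { exists p. split; [intros; apply Hp; lia|]. intros al Hal. rewrite sa_eq. unfold S2.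
      pose proof (Hsel al 0 0 ltac:(lia) ltac:(lia) (or_introl Hal)) as A1.
      pose proof (Hsel al 0 j ltac:(lia) ltac:(lia) (or_introl Hal)) as A2.
      pose proof (Hsel al 0 j' ltac:(lia) ltac:(lia) (or_introl Hal)) as A3.
      pose proof (Hsel al j j' ltac:(lia) ltac:(lia) (or_introl Hal)) as A4.
      rewrite R0, Nat.sub_diag, Nat.add_0_r in A1. rewrite R0, Nat.sub_0_r in A2, A3.
      repeat split; auto. }
    destruct (HN S2 (fun n => c (n + R j)) (fun n => Hc _) HIP2) as [f [Hf1 [Hf2 Hf3]]].
    exists (f + R j). split; [lia|]. split; [apply Hf2|].
    apply IP_use in Hf3. destruct Hf3 as [q [Hq Hqs]].
    apply (IP_ext _ m q (R j' - R j)); auto; try lia.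
    + intros al Hal. specialize (Hqs al Hal). set (n := sa q al m) in *.
      destruct Hqs as [[B1 _] [[_ [B2 _]] B3]]. simpl in B3.
      replace (f + R j + n) with (f + n + R j) by lia. auto.
    + pose proof (Hsel (fun _ => false) j j' ltac:(lia) ltac:(lia) (or_intror Hjj)) as A.
      unfold sa, ns in A. rewrite (ns_zero _ N) in A by auto. simpl in A. split; auto.
      destruct Hf2 as [_ [_ [C3 [_ C5]]]].
      replace (f + R j + (R j' - R j)) with (f + R j') by lia. auto.
    + intros al Hal. specialize (Hqs al Hal). set (n := sa q al m) in *.
      destruct Hqs as [[_ [_ [_ [B4 _]]]] [[_ [_ [B3 [_ B5]]]] B6]]. simpl in B6.
      split; [rewrite Nat.add_comm; auto|].
      replace (f + R j + (R j' - R j + n)) with (f + n + R j') by lia. split; auto.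
      rewrite <- B5. rewrite B6. reflexivity.
Qed.

Lemma ns_const1 n : ns (fun _ => 1) n = n.
Proof. induction n; [reflexivity|]. rewrite ns_S, IHn. lia. Qed.

Lemma ns_dec v K k0 : k0 < K -> 1 <= v k0 ->
  ns (fun i => if i =? k0 then v k0 - 1 else v i) K + 1 = ns v K.
Proof.
  intros Hk Hv.
  assert (E : ns (fun i => (if i =? k0 then v k0 - 1 else v i) + (if (k0 <=? i) && (i <? k0 + 1) then 1 else 0)) K = ns v K).
  { apply ns_ext. intros i _. destruct (Nat.eqb_spec i k0), (Nat.leb_spec k0 i), (Nat.ltb_spec i (k0+1)); simpl; subst; lia. }
  rewrite ns_add in E. rewrite (ns_interval (fun _ => 1)) in E by lia. rewrite !ns_const1 in E. lia.
Qed.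

Lemma Wlem K n : exists L, forall v : nat -> nat, ns v K <= n -> forall (S : nat -> Prop) c,
  (forall x, c x < K) -> IP S L -> exists k, k < K /\ IP (fun x => S x /\ c x = k) (v k).
Proof.
  induction n.
  - exists 0. intros v Hv S c Hc _. exists 0. pose proof (Hc 0).
    split; [lia|]. pose proof (ns_ge v K 0 ltac:(lia)). replace (v 0) with 0 by lia. apply IP_zero.
  - destruct IHn as [Ln HLn]. destruct (cube Ln K) as [L HL]. exists L.
    intros v Hv S c Hc HIP. destruct (HL S c Hc HIP) as [f [Hf1 [Hf2 Hf3]]].
    set (k0 := c f). assert (Hk0 : k0 < K) by apply Hc.
    destruct (Nat.eq_dec (v k0) 0) as [E0|E0].
    { exists k0. split; auto. rewrite E0. apply IP_zero. }
    set (v' := fun i => if i =? k0 then v k0 - 1 else v i).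
    pose proof (ns_dec v K k0 Hk0 ltac:(lia)) as Hd. fold v' in Hd.
    destruct (HLn v' ltac:(lia) _ c Hc Hf3) as [k [Hk HIPk]].
    exists k. split; auto. destruct (Nat.eqb_spec k k0).
    + subst k. unfold v' in HIPk. rewrite Nat.eqb_refl in HIPk.
      apply IP_use in HIPk. destruct HIPk as [q [Hq Hqs]].
      replace (v k0) with (Datatypes.S (v k0 - 1)) by lia.
      apply (IP_ext _ _ q f); auto.
      * intros al Hal. destruct (Hqs al Hal) as [[A _] B]. auto.
      * intros al Hal. destruct (Hqs al Hal) as [[_ [A1 A2]] _]. auto.
    + unfold v' in HIPk. replace (k =? k0) with false in HIPk by (symmetry; apply Nat.eqb_neq; auto).
      revert HIPk. apply IP_weaken. intros x [[A _] B]. auto.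
Qed.

Lemma folk D K : exists L, forall (S : nat -> Prop) c,
  (forall x, c x < K) -> IP S L -> exists k, IP (fun x => S x /\ c x = k) D.
Proof.
  destruct (Wlem K (ns (fun _ => D) K)) as [L HL]. exists L.
  intros S c Hc HIP. destruct (HL (fun _ => D) (le_n _) S c Hc HIP) as [k [_ H]]. eauto.
Qed.
End Comb.
Import Comb.
Open Scope R_scope.
Open Scope R_scope.

Lemma zpow_nat {X} (T Tinv : X -> X) n w : zpow T Tinv (Z.of_nat n) w = Nat.iter n T w.
Proof.
  destruct n; [reflexivity|]. simpl. rewrite SuccNat2Pos.id_succ. reflexivity.
Qed.

Lemma dot_eps_nat D (g : nat -> nat) eps :
  dot_eps D (fun i => Z.of_nat (g i)) eps = Z.of_nat (ns (fun i => if eps i then g i else 0%nat) D).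
Proof.
  unfold dot_eps. induction D; [reflexivity|]. simpl. rewrite IHD. rewrite ns_S.
  destruct (eps D); lia.
Qed.

Lemma zs_ext (f g : nat -> Z) m : (forall i, (i < m)%nat -> f i = g i) ->
  sum_below Z.add 0%Z f m = sum_below Z.add 0%Z g m.
Proof.
  induction m; intros H; [reflexivity|]. simpl. rewrite IHm by (intros; apply H; lia).
  rewrite H by lia. reflexivity.
Qed.

Lemma dot_eps_restr D k n eps :
  dot_eps (D + k) n (fun i => andb (Nat.ltb i D) (eps i)) = dot_eps D n eps.
Proof.
  unfold dot_eps. induction k.
  - rewrite Nat.add_0_r. apply zs_ext. intros i Hi.
    replace (Nat.ltb i D) with true by (symmetry; apply Nat.ltb_lt; lia). reflexivity.
  - replace (D + S k)%nat with (S (D + k)) by lia. simpl. rewrite IHk.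
    replace (Nat.ltb (D + k) D) with false by (symmetry; apply Nat.ltb_ge; lia). simpl. lia.
Qed.

Lemma ball_open {X} (d : X -> X -> R) (c : X) (r : R) : is_metric d -> Defs.open_set d (fun w => d c w < r).
Proof.
  intros [H0 [H1 [H2 H3]]] w Hw. exists (r - d c w). split; [lra|].
  intros y Hy. pose proof (H3 c w y). lra.
Qed.

Lemma dself {X} (d : X -> X -> R) w : is_metric d -> d w w = 0.
Proof. intros [H0 [H1 _]]. apply H1. reflexivity. Qed.

Lemma net {X} (d : X -> X -> R) : is_metric d -> compact_space d -> forall r, r > 0 ->
  exists (K : nat) (col : X -> nat), (forall w, (col w < K)%nat) /\
    forall w1 w2, col w1 = col w2 -> d w1 w2 < 2 * r.
Proof.
  intros Hm Hc r Hr.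
  destruct (Hc X (fun c w => d c w < r)) as [l Hl].
  - intros c. apply ball_open, Hm.
  - intros w. exists w. rewrite dself; auto.
  - assert (Hex : forall w, exists i, (i < length l)%nat /\ d (nth i l w) w < r).
    { intros w. destruct (Hl w) as [c [Hin Hcw]]. destruct (In_nth l c w Hin) as [i [Hi E]].
      exists i. rewrite E. auto. }
    exists (length l), (fun w => proj1_sig (constructive_indefinite_description _ (Hex w))).
    split.
    + intros w. apply (proj2_sig (constructive_indefinite_description _ (Hex w))).
    + intros w1 w2 E.
      pose proof (proj2_sig (constructive_indefinite_description _ (Hex w1))) as [Hi D1].
      pose proof (proj2_sig (constructive_indefinite_description _ (Hex w2))) as [Hj D2].
      rewrite <- E in D2.
      set (i := proj1_sig (constructive_indefinite_description _ (Hex w1))) in *.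
      rewrite (nth_indep l w2 w1 Hi) in D2.
      destruct Hm as [_ [_ [Hs Ht]]]. pose proof (Ht w1 (nth i l w1) w2). rewrite (Hs w1 (nth i l w1)) in H. lra.
Qed.

Lemma cluster {X} (d : X -> X -> R) (ys : nat -> X) : is_metric d -> compact_space d ->
  exists z, forall e, e > 0 -> forall M, exists m, (M <= m)%nat /\ d (ys m) z < e.
Proof.
  intros Hm Hc. apply NNPP. intros Hn.
  assert (Hall : forall z, exists e, e > 0 /\ exists M, forall m, (M <= m)%nat -> e <= d (ys m) z).
  { intros z. apply NNPP. intros H1. apply Hn. exists z. intros e He M.
    apply NNPP. intros H2. apply H1. exists e. split; auto. exists M. intros m Hm'.
    apply Rnot_lt_le. intros H3. apply H2. exists m. auto. }
  destruct (Hc ((X * R) * nat)%type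
     (fun i w => snd (fst i) > 0 /\ (forall m, (snd i <= m)%nat -> snd (fst i) <= d (ys m) (fst (fst i)))
                 /\ d (fst (fst i)) w < snd (fst i))) as [l Hl].
  - intros [[c e] M] w [A [B C]]. simpl in *. destruct (ball_open d c e Hm w C) as [r [Hr Hr']].
    exists r. split; auto.
  - intros w. destruct (Hall w) as [e [He [M HM]]]. exists ((w, e), M). simpl. rewrite dself; auto.
  - set (Mx := fold_right (fun i acc => Nat.max (snd i) acc) 0%nat l).
    assert (HMx : forall i, In i l -> (snd i <= Mx)%nat).
    { unfold Mx. clear. induction l; simpl; [tauto|]. intros i [<-|H]; [lia|]. specialize (IHl i H). lia. }
    destruct (Hl (ys Mx)) as [[[c e] M] [Hin [A [B C]]]]. simpl in *.
    specialize (B Mx (HMx _ Hin)). destruct Hm as [_ [_ [Hs _]]]. rewrite Hs in C. lra.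
Qed.

Lemma decode (K0 a b a' b' : nat) : (b < K0)%nat -> (b' < K0)%nat ->
  (a * K0 + b = a' * K0 + b')%nat -> a = a' /\ b = b'.
Proof.
  intros H1 H2 E. apply (Nat.div_mod_unique K0); auto. rewrite !(Nat.mul_comm K0). exact E.
Qed.

Lemma sa_single q D : sa q (fun i => Nat.eqb i 0) (S D) = q 0%nat.
Proof.
  unfold sa. rewrite ns_shift. simpl. rewrite ns_zero; [lia|]. intros i _. reflexivity.
Qed.

Lemma sa_shift q (b : bool) (eps : nat -> bool) D :
  sa q (fun i => match i with 0%nat => b | S i' => eps i' end) (S D)
  = ((if b then q 0%nat else 0%nat) + ns (fun i => if eps i then q (S i) else 0%nat) D)%nat.
Proof. unfold sa. rewrite ns_shift. reflexivity. Qed.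

Lemma approx {X} (d : X -> X -> R) (T Tinv : X -> X) (x : X) (delta : R) :
  is_metric d -> compact_space d -> delta > 0 -> block_Fip_sensitive d T (10 * delta) ->
  forall (D : nat) (eta : R), eta > 0 -> exists c, 3 * delta <= d x c /\
    exists x' y' (n : nat -> Z), d c x' < eta /\ d x y' < eta /\
      forall eps : nat -> bool, (exists i, (i < D)%nat /\ eps i = true) ->
        d (zpow T Tinv (dot_eps D n eps) x') (zpow T Tinv (dot_eps D n eps) y') < eta.
Proof.
  intros Hm Hc Hd Hsens D eta Heta.
  destruct (net d Hm Hc (eta / 2) ltac:(lra)) as [K0 [col [Hcol Hcold]]].
  destruct (folk (S D) (K0 * K0)) as [L HL].
  destruct (Hsens x (fun w => d x w < eta)) with (l := L) as [y [Hy HIP]].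
  { exists (fun w => d x w < eta). split; [apply ball_open, Hm|]. split; auto. rewrite dself; auto. }
  set (c := fun n => (col (Nat.iter n T x) * K0 + col (Nat.iter n T y))%nat).
  assert (Hcb : forall n, (c n < K0 * K0)%nat).
  { intros n. unfold c. pose proof (Hcol (Nat.iter n T x)). pose proof (Hcol (Nat.iter n T y)). nia. }
  destruct (HL _ c Hcb HIP) as [k Hk]. apply IP_use in Hk. destruct Hk as [q [Hq Hqs]].
  assert (Hsame : forall al1 al2, (exists i, (i < S D)%nat /\ al1 i = true) ->
     (exists i, (i < S D)%nat /\ al2 i = true) ->
     d (Nat.iter (sa q al1 (S D)) T x) (Nat.iter (sa q al2 (S D)) T x) < eta /\
     d (Nat.iter (sa q al1 (S D)) T y) (Nat.iter (sa q al2 (S D)) T y) < eta).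
  { intros al1 al2 H1 H2. destruct (Hqs al1 H1) as [_ E1]. destruct (Hqs al2 H2) as [_ E2].
    rewrite <- E2 in E1. unfold c in E1. apply decode in E1; try apply Hcol. destruct E1 as [E1 E1'].
    split; [apply Hcold in E1|apply Hcold in E1']; lra. }
  destruct (Hqs (fun i => Nat.eqb i 0) ltac:(exists 0%nat; split; [lia|reflexivity])) as [Hsq0 _].
  rewrite sa_single in Hsq0.
  set (q0 := q 0%nat) in *.
  set (n := fun i => Z.of_nat (q (S i))).
  assert (Hvert : forall (w : X) eps, (exists i, (i < D)%nat /\ eps i = true) ->
     (w = x \/ w = y) ->
     d (zpow T Tinv (dot_eps D n eps) (Nat.iter q0 T w)) (zpow T Tinv (dot_eps D n eps) w) < eta).
  { intros w eps He Hw. unfold n. rewrite dot_eps_nat, !zpow_nat.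
    rewrite <- Nat.iter_add.
    set (al1 := fun i => match i with 0%nat => true | S i' => eps i' end).
    set (al2 := fun i => match i with 0%nat => false | S i' => eps i' end).
    assert (E1 : sa q al1 (S D) = (ns (fun i => if eps i then q (S i) else 0%nat) D + q0)%nat).
    { unfold al1. rewrite sa_shift. unfold q0. lia. }
    assert (E2 : sa q al2 (S D) = ns (fun i => if eps i then q (S i) else 0%nat) D).
    { unfold al2. rewrite sa_shift. lia. }
    destruct He as [i [Hi Hei]].
    assert (N1 : exists i, (i < S D)%nat /\ al1 i = true) by (exists 0%nat; split; [lia|reflexivity]).
    assert (N2 : exists i, (i < S D)%nat /\ al2 i = true) by (exists (S i); split; [lia|exact Hei]).
    destruct (Hsame al1 al2 N1 N2) as [A B]. rewrite E1, E2 in A, B.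
    destruct Hw; subst w; auto. }
  pose proof Hm as [Hpos [Hid [Hsym Htri]]].
  pose proof (Htri (Nat.iter q0 T x) x (Nat.iter q0 T y)) as Ht.
  rewrite (Hsym (Nat.iter q0 T x) x) in Ht.
  destruct (Rle_or_lt (5 * delta) (d x (Nat.iter q0 T x))) as [Ca|Cb].
  - exists (Nat.iter q0 T x). split; [lra|].
    exists (Nat.iter q0 T x), x, n. rewrite (dself d _ Hm), (dself d x Hm). split; [lra|]. split; [lra|].
    intros eps He. apply Hvert; auto.
  - exists (Nat.iter q0 T y). split; [lra|].
    exists (Nat.iter q0 T y), y, n. rewrite (dself d _ Hm). split; [lra|]. split; [exact Hy|].
    intros eps He. apply Hvert; auto.
Qed.

Lemma arch e : e > 0 -> exists N : nat, / (INR N + 1) < e.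
Proof.
  intros He. destruct (archimed (/ e)) as [A _].
  assert (Hp : / e > 0) by (apply Rinv_0_lt_compat; lra).
  exists (Z.to_nat (up (/ e))).
  rewrite INR_IZR_INZ, Z2Nat.id.
  2:{ apply le_IZR. simpl. lra. }
  assert (IZR (up (/e)) + 1 > / e) by lra.
  pose proof (Rinv_lt_contravar (/ e) (IZR (up (/ e)) + 1) ltac:(apply Rmult_lt_0_compat; lra) H) as H'.
  rewrite Rinv_inv in H'. exact H'.
Qed.

Theorem proposition4p11 (X : Type) (d : X -> X -> R) (T Tinv : X -> X) (delta : R) :
  is_metric d -> compact_space d ->
  continuous_map d T -> continuous_map d Tinv ->
  (forall x, T (Tinv x) = x) -> (forall x, Tinv (T x) = x) ->
  minimal d T ->
  delta > 0 ->
  block_Fip_sensitive d T (10 * delta) ->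
  forall (x : X) (U : X -> Prop), nbhd d x U ->
  exists z y, U z /\ RP_inf d T Tinv y z /\ d z y >= delta.
Proof.
  intros Hm Hc _ _ _ _ _ Hd Hsens x U HU.
  assert (Hex : forall m : nat, exists c, 3 * delta <= d x c /\
    exists x' y' (n : nat -> Z), d c x' < / (INR m + 1) /\ d x y' < / (INR m + 1) /\
      forall eps : nat -> bool, (exists i, (i < m)%nat /\ eps i = true) ->
        d (zpow T Tinv (dot_eps m n eps) x') (zpow T Tinv (dot_eps m n eps) y') < / (INR m + 1)).
  { intros m. apply (approx d T Tinv x delta Hm Hc Hd Hsens).
    apply Rinv_0_lt_compat. pose proof (pos_INR m). lra. }
  set (ys := fun m => proj1_sig (constructive_indefinite_description _ (Hex m))).
  assert (Hys : forall m, 3 * delta <= d x (ys m) /\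
    exists x' y' (n : nat -> Z), d (ys m) x' < / (INR m + 1) /\ d x y' < / (INR m + 1) /\
      forall eps : nat -> bool, (exists i, (i < m)%nat /\ eps i = true) ->
        d (zpow T Tinv (dot_eps m n eps) x') (zpow T Tinv (dot_eps m n eps) y') < / (INR m + 1)).
  { intros m. exact (proj2_sig (constructive_indefinite_description _ (Hex m))). }
  destruct (cluster d ys Hm Hc) as [z Hz].
  pose proof Hm as [Hpos [Hid [Hsym Htri]]].
  exists x, z. split; [|split].
  - destruct HU as [V [_ [Vx HV]]]. auto.
  - intros D HD eta Heta.
    destruct (arch (eta / 2) ltac:(lra)) as [M0 HM0].
    destruct (Hz (eta / 2) ltac:(lra) (Nat.max D M0)) as [m [Hmm Hdm]].
    destruct (Hys m) as [_ [x' [y' [n [A1 [A2 A3]]]]]].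
    assert (Hle : / (INR m + 1) <= / (INR M0 + 1)).
    { apply Rinv_le_contravar. pose proof (pos_INR M0). lra.
      apply Rplus_le_compat_r. apply le_INR. lia. }
    exists x', y', n. split; [|split].
    + pose proof (Htri z (ys m) x'). rewrite (Hsym z (ys m)) in H. lra.
    + lra.
    + intros eps [i [Hi Hei]].
      replace m with (D + (m - D))%nat in A3 by lia.
      specialize (A3 (fun i => andb (Nat.ltb i D) (eps i))).
      rewrite dot_eps_restr in A3. 
      assert (Hr : / (INR (D + (m - D)) + 1) < eta).
      { replace (D + (m - D))%nat with m by lia. lra. }
      apply (Rlt_trans _ _ _ (A3 ltac:(exists i; split; [lia|]; rewrite Hei; apply andb_true_intro; split; [apply Nat.ltb_lt; lia|reflexivity]))). exact Hr.
  - destruct (Hz delta Hd 0%nat) as [m [_ Hdm]].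
    destruct (Hys m) as [H3 _].
    pose proof (Htri x z (ys m)). rewrite (Hsym z (ys m)) in H. lra.
Qed.
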